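(* If degree sequences $e$ and $d$ satisfy $e\preccurlyeq d$ in the Rao order, then $\Delta^*(e)\le \Delta^*(d)$.
   Context: Degree sequences (of finite simple graphs with at least one vertex) are listed in nonincreasing order. For such $d$, $m(d)=\max\{i : d_i\ge i-1\}$ and, for integers $k\ge 0$, $\Delta_k(d)=k(k-1)+\sum_{i>k}\min\{k,d_i\}-\sum_{i\le k}d_i$; $\Delta^*(d)=\max\{\Delta_k(d):1\le k\le m(d)\}$. Rao order: $e\preccurlyeq d$ if there exist a realization $H$ of $e$ and a realization $G$ of $d$ such that $H$ is an induced subgraph of $G$. *)

(* Defs.v *)
From mathcomp Require Import all_boot all_order all_algebra.
Set Implicit Arguments. Unset Strict Implicit. Unset Printing Implicit Defensive.
Import Order.TTheory GRing.Theory Num.Theory.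

(* A degree sequence d (a seq nat, d_i = nth 0 d (i-1))
   is realized by g : rel 'I_n when n = size d and vertex i has degree
   nth 0 d i (realizations are taken with vertices labelled so that vertex
   i carries the i-th entry; any realization can be relabelled so). *)
Definition simple_graph (n : nat) (g : rel 'I_n) : Prop :=
  symmetric g /\ irreflexive g.

Definition deg (n : nat) (g : rel 'I_n) (v : 'I_n) : nat := #|[set w | g v w]|.

Definition realizes (n : nat) (g : rel 'I_n) (d : seq nat) : Prop :=
  simple_graph g /\ size d = n /\ forall v : 'I_n, deg g v = nth 0 d v.

Definition degree_sequence (d : seq nat) : Prop :=
  (0 < size d)%N /\ sorted geq d /\ exists n (g : rel 'I_n), realizes g d.

(* Rao order: e <= d iff some realization H of e is an induced subgraph of
   some realization G of d (H is isomorphic, via an injective map f, to the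
   subgraph of G induced on the image of f). *)
Definition rao_le (e d : seq nat) : Prop :=
  exists (m n : nat) (h : rel 'I_m) (g : rel 'I_n) (f : 'I_m -> 'I_n),
    [/\ realizes h e, realizes g d, injective f &
        forall x y : 'I_m, h x y = g (f x) (f y)].

(* m(d) = max { i (1-based) : d_i >= i - 1 }; with 0-based j = i - 1 *)
Definition mdeg (d : seq nat) : nat :=
  \max_(j < size d | (j <= nth 0 d j)%N) j.+1.

Definition Delta (k : nat) (d : seq nat) : int :=
  ((k * (k - 1))%N%:Z
   + (\sum_(k <= j < size d) minn k (nth 0 d j))%N%:Z
   - (\sum_(0 <= j < k) nth 0 d j)%N%:Z)%R.

Definition Delta_star (d : seq nat) : int :=
  \big[Num.max/Delta 1 d]_(1 <= k < (mdeg d).+1) Delta k d.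

(* Main.v *)
Require Import Defs.
From mathcomp Require Import all_boot all_order all_algebra zify.
Import Order.TTheory GRing.Theory Num.Theory.
Set Implicit Arguments. Unset Strict Implicit.

Section Gen.
Variable T : finType.

Lemma sumC (X : {set T}) (F : T -> nat) :
  \sum_(x in X) F x + \sum_(x in ~: X) F x = \sum_x F x.
Proof.
have -> : \sum_x F x = \sum_(x in setT) F x by apply: eq_bigl => x; rewrite inE.
by rewrite [RHS](big_setID X) /= setTI setTD.
Qed.

Lemma sum_split (X Y : {set T}) (F : T -> nat) :
  \sum_(x in X) F x = \sum_(x in X :&: Y) F x + \sum_(x in X :\: Y) F x.
Proof. exact: big_setID. Qed.

Lemma sum_sub (X Y : {set T}) (F : T -> nat) : X \subset Y ->
  \sum_(x in X) F x <= \sum_(x in Y) F x.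
Proof.
move=> sXY; rewrite (sum_split Y X) (setIidPr sXY); exact: leq_addr.
Qed.

Lemma sum_le_card (X : {set T}) (F : T -> nat) c :
  (forall x, x \in X -> F x <= c) -> \sum_(x in X) F x <= #|X| * c.
Proof. by move=> H; rewrite -sum_nat_const; apply: leq_sum. Qed.

Lemma sum_ge_card (X : {set T}) (F : T -> nat) c :
  (forall x, x \in X -> c <= F x) -> #|X| * c <= \sum_(x in X) F x.
Proof. by move=> H; rewrite -sum_nat_const; apply: leq_sum. Qed.

Variable r : rel T.
Definition N (v : T) (X : {set T}) : nat := \sum_(w in X) r v w.

Lemma N_le v (X : {set T}) : N v X <= #|X|.
Proof. by rewrite /N -sum1_card; apply: leq_sum => w _; case: (r v w). Qed.

Lemma N_sub v (X Y : {set T}) : X \subset Y -> N v X <= N v Y.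
Proof. exact: sum_sub. Qed.

Lemma N_splitC v (X : {set T}) : N v X + N v (~: X) = N v setT.
Proof.
rewrite /N sumC; apply: eq_bigl => x; by rewrite inE.
Qed.

Lemma N_split v (X Y : {set T}) : N v X = N v (X :&: Y) + N v (X :\: Y).
Proof. exact: sum_split. Qed.

Lemma deg_N v : #|[set w | r v w]| = N v setT.
Proof.
rewrite -sum1_card /N big_mkcond /= [RHS]big_mkcond /=.
by apply: eq_bigr => w _; rewrite !inE; case: (r v w).
Qed.

Lemma N_irr v (X : {set T}) : irreflexive r -> v \in X -> N v X <= #|X| - 1.
Proof.
move=> irr vX; rewrite /N (bigD1 v vX) /= irr add0n.
rewrite (cardsD1 v X) vX add1n subn1 /=.
rewrite (eq_bigl (mem (X :\ v))) => [|w]; last by rewrite !inE andbC.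
by rewrite -sum1_card; apply: leq_sum => w _; case: (r v w).
Qed.

Hypothesis rsym : symmetric r.
Lemma N_sym (X Y : {set T}) :
  \sum_(x in X) N x Y = \sum_(y in Y) N y X.
Proof.
rewrite /N exchange_big /=; apply: eq_bigr => y _; apply: eq_bigr => x _.
by rewrite rsym.
Qed.
End Gen.

Ltac genbig := repeat match goal with
 | |- context [ bigop ?a ?b ?c ] => let s := fresh "s" in set s := bigop a b c; clearbody s
 end.

Lemma nth_anti (s : seq nat) i j : sorted geq s -> i <= j -> nth 0 s j <= nth 0 s i.
Proof.
move=> ss ij; case: (ltnP j (size s)) => hj; last by rewrite nth_default.
have hi : i < size s by apply: leq_ltn_trans hj.
have tr : transitive geq by move=> a b c /= h1 h2; apply: leq_trans h2 h1.
exact: (sorted_leq_nth tr (fun a => leqnn a) 0 ss).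
Qed.

Lemma card_lt p k : k <= p -> #|[set x : 'I_p | x < k]| = k.
Proof.
move=> kp.
have -> : [set x : 'I_p | x < k] = widen_ord kp @: [set: 'I_k].
  apply/setP => x; rewrite !inE; apply/idP/imsetP => [xk|[y _ ->]]; last exact: (ltn_ord y).
  by exists (Ordinal xk) => //; apply: val_inj.
rewrite card_imset ?cardsT ?card_ord //; by move=> a b /(congr1 val) /= /val_inj.
Qed.

Lemma topk p k (F : nat -> nat) (S : {set 'I_p}) :
  (forall i j, i <= j -> F j <= F i) -> k <= p -> #|S| = k ->
  \sum_(x in S) F x <= \sum_(x in [set x : 'I_p | x < k]) F x.
Proof.
move=> Fa kp cS; set K := [set x : 'I_p | x < k].
rewrite (sum_split S K) [X in _ <= X](sum_split K S) setIC leq_add2l.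
have h1 : \sum_(x in S :\: K) F x <= #|S :\: K| * F k.
  apply: sum_le_card => x; rewrite !inE -leqNgt => /andP[kx _]; exact: Fa.
have h2 : #|K :\: S| * F k <= \sum_(x in K :\: S) F x.
  apply: sum_ge_card => x; rewrite !inE => /andP[_ xk]; apply: Fa; exact: ltnW.
have e : #|S :\: K| = #|K :\: S| by rewrite !cardsD cS card_lt // setIC.
by apply: leq_trans h1 _; rewrite e.
Qed.

Lemma sum_lo n k (G : nat -> nat) : k <= n ->
  \sum_(0 <= j < k) G j = \sum_(x in [set x : 'I_n | x < k]) G x.
Proof.
move=> kn; rewrite (big_nat_widen _ _ _ _ _ kn) big_mkord.
by apply: eq_bigl => x; rewrite inE.
Qed.

Lemma sum_hi n k (G : nat -> nat) : k <= n ->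
  \sum_(k <= j < n) G j = \sum_(x in ~: [set x : 'I_n | x < k]) G x.
Proof.
move=> kn; apply/(@addnI (\sum_(0 <= j < k) G j)).
rewrite -big_cat_nat // (sum_lo _ kn) sumC big_mkord.
by apply: eq_bigl.
Qed.

Lemma Delta_ord s n k : size s = n -> k <= n ->
  Delta k s = ((k*(k-1))%N%:Z
   + (\sum_(x in ~: [set x : 'I_n | (x < k)%N]) minn k (nth 0 s x))%N%:Z
   - (\sum_(x in [set x:'I_n | (x<k)%N]) nth 0 s x)%N%:Z)%R.
Proof. by move=> sn kn; rewrite /Delta sn (sum_hi _ kn) (sum_lo _ kn). Qed.

Lemma ar1 a j : a <= j -> (j - a) * (j - 1) + a * (j - a) + a * (a - 1) = j * (j - 1).
Proof. move=> aj. nia. Qed.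
Lemma ar2 a k : a <= k -> k * (k - 1) <= a * (a - 1) + 2 * ((k - a) * (k - 1)).
Proof. move=> ak. nia. Qed.

Section Graph.
Variables (n p : nat) (g : rel 'I_n) (h : rel 'I_p) (f : 'I_p -> 'I_n).
Hypotheses (gsym : symmetric g) (girr : irreflexive g) (hsym : symmetric h)
  (finj : injective f) (fh : forall x y, h x y = g (f x) (f y)).
Variables (j : nat) (jn : j <= n).

Let T := [set v : 'I_n | v < j].
Let A := [set x : 'I_p | f x < j].

Lemma Nimg x (X : {set 'I_p}) : N g (f x) (f @: X) = N h x X.
Proof.
rewrite /N big_imset /=; last by move=> a b _ _; apply: finj.
by apply: eq_bigr => y _; rewrite fh.
Qed.

Lemma fA_sub : f @: A \subset T.
Proof. by apply/subsetP => v /imsetP[x]; rewrite !inE => xA ->. Qed.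

Lemma fAc_sub : f @: (~: A) \subset ~: T.
Proof. by apply/subsetP => v /imsetP[x]; rewrite !inE => xA ->. Qed.

Lemma cardT : #|T| = j.
Proof. exact: card_lt. Qed.

Lemma cardTD : #|T :\: f @: A| = j - #|A|.
Proof. by rewrite cardsD (setIidPr fA_sub) cardT card_imset. Qed.

Lemma pv1 x : N g (f x) T = N h x A + N g (f x) (T :\: f @: A).
Proof. by rewrite (N_split _ _ _ (f @: A)) (setIidPr fA_sub) Nimg. Qed.

Lemma pv2 x : N h x setT + N g (f x) (T :\: f @: A) <= N g (f x) setT.
Proof.
rewrite -(N_splitC g (f x) (f @: setT)) -Nimg leq_add2l.
apply: N_sub; apply/subsetP => w; rewrite !inE => /andP[wA wT].
apply/imsetP => -[y _ wy]; move: wA; rewrite wy; case/negP.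
by apply: imset_f; rewrite inE -wy.
Qed.

Lemma pv3 x : N g (f x) (T :\: f @: A) <= j - #|A|.
Proof. by rewrite -cardTD; apply: N_le. Qed.

Lemma lemA : \sum_(v in T) N g v T + #|A| * (#|A| - 1)
   <= j * (j - 1) + \sum_(x in A) N h x A.
Proof.
rewrite (sum_split T (f @: A)) (setIidPr fA_sub) big_imset /=;
  last by move=> a b _ _; apply: finj.
have h1 : \sum_(x in A) N g (f x) T <= \sum_(x in A) N h x A + #|A| * (j - #|A|).
  rewrite -sum_nat_const -big_split /=; apply: leq_sum => x _.
  by rewrite pv1 leq_add2l pv3.
have h2 : \sum_(v in T :\: f @: A) N g v T <= #|T :\: f @: A| * (j - 1).
  apply: sum_le_card => v; rewrite inE => /andP[_ vT].
  by rewrite -cardT; apply: N_irr.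
rewrite cardTD in h2.
have aj : #|A| <= j by rewrite -cardT -(card_imset _ finj); apply: subset_leq_card; exact: fA_sub.
rewrite -(ar1 aj).
move: h1 h2; set P1 := (j - #|A|) * (j - 1); set P2 := #|A| * (j - #|A|); set P3 := #|A| * (#|A| - 1).
clearbody P1 P2 P3; move: (\sum_(x in A) N h x A) (\sum_(x in A) N g (f x) T) (\sum_(v in T :\: f @: A) N g v T) => s1 s2 s3; lia.
Qed.


Lemma aj : #|A| <= j.
Proof. by rewrite -cardT -(card_imset _ finj); apply: subset_leq_card; exact: fA_sub. Qed.

Lemma lemB (k : nat) : #|A| = k ->
  \sum_(x in ~: A) minn k (N h x setT) + \sum_(v in ~: T) N g v T <=
  \sum_(v in ~: T) minn j (N g v setT) + \sum_(x in ~: A) N h x A.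
Proof.
move=> cA.
pose phi v := minn j (N g v setT) - N g v T.
have e1 : forall v, phi v + N g v T = minn j (N g v setT).
  move=> v; rewrite /phi subnK // leq_min; apply/andP; split.
    by rewrite -cardT; apply: N_le.
  by apply: N_sub; apply: subsetT.
have kj : k <= j by rewrite -cA; exact: aj.
have h1 : \sum_(x in ~:A) minn k (N h x setT) <=
          \sum_(x in ~:A) phi (f x) + \sum_(x in ~:A) N h x A.
  rewrite -big_split; apply: leq_sum => x _ /=.
  have := pv1 x; have := pv2 x; have := pv3 x; have := e1 (f x); rewrite cA.
  move: (phi (f x)) (N g (f x) T) (N g (f x) (T :\: f @: A)) (N h x setT) (N g (f x) setT) (N h x A).
  move=> a b c d e q; lia.
have e2 : \sum_(v in f @: (~: A)) phi v = \sum_(x in ~:A) phi (f x).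
  by rewrite big_imset // => a b _ _; apply: finj.
have h2 : \sum_(x in ~:A) phi (f x) <= \sum_(v in ~:T) phi v.
  by rewrite -e2; apply: sum_sub; exact: fAc_sub.
have h3 : \sum_(v in ~:T) phi v + \sum_(v in ~:T) N g v T = \sum_(v in ~:T) minn j (N g v setT).
  by rewrite -big_split; apply: eq_bigr => v _; exact: e1.
move: h1 h2 h3; genbig; lia.
Qed.

Lemma sumdeg (r : rel 'I_n) (X : {set 'I_n}) : symmetric r ->
  \sum_(v in X) N r v setT = \sum_(v in X) N r v X + \sum_(v in ~: X) N r v X.
Proof.
move=> rs; rewrite [\sum_(v in ~: X) _](N_sym rs) -big_split; apply: eq_bigr => v _.
by rewrite -(N_splitC r v X).
Qed.

Lemma sumdegh (X : {set 'I_p}) :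
  \sum_(v in X) N h v setT = \sum_(v in X) N h v X + \sum_(v in ~: X) N h v X.
Proof.
rewrite [\sum_(v in ~: X) _](N_sym hsym) -big_split; apply: eq_bigr => v _.
by rewrite -(N_splitC h v X).
Qed.

Lemma star1 (k : nat) : #|A| = k ->
  k * (k - 1) + \sum_(x in ~: A) minn k (N h x setT) + \sum_(v in T) N g v setT <=
  j * (j - 1) + \sum_(v in ~: T) minn j (N g v setT) + \sum_(x in A) N h x setT.
Proof.
move=> cA.
have hA := lemA; have hB := lemB cA; rewrite cA in hA.
rewrite (sumdeg _ gsym) sumdegh.
move: hA hB; move: (k * (k - 1)) (j * (j - 1)) => P Q; genbig; lia.
Qed.

Lemma star2 (k : nat) (B : {set 'I_p}) :
  #|A| <= k -> B \subset ~: A -> #|B| = k - #|A| ->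
  (forall x, x \in B -> k - 1 <= N h x setT) ->
  (forall v, v \notin T -> N g v setT <= j) ->
  k * (k - 1) + \sum_(x in ~: (A :|: B)) minn k (N h x setT) + \sum_(v in T) N g v setT <=
  j * (j - 1) + \sum_(v in ~: T) minn j (N g v setT) + \sum_(x in A :|: B) N h x setT.
Proof.
move=> ak sB cB Bdeg Tdeg.
set S := A :|: B.
have G1 : \sum_(v in ~: T) minn j (N g v setT) = \sum_(v in ~: T) N g v setT.
  by apply: eq_bigr => v; rewrite inE => vT; apply/minn_idPr; apply: Tdeg.
have G2 : \sum_(v in ~: T) N g v setT = \sum_(v in ~: T) N g v T + \sum_(v in ~: T) N g v (~: T).
  by rewrite -big_split; apply: eq_bigr => v _; rewrite -(N_splitC g v T).
have G4 : \sum_(x in ~: A) N h x (~: A) <= \sum_(v in ~: T) N g v (~: T).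
  have -> : \sum_(x in ~: A) N h x (~: A) = \sum_(x in ~: A) N g (f x) (f @: ~: A).
    by apply: eq_bigr => x _; rewrite Nimg.
  apply: leq_trans (_ : \sum_(x in ~: A) N g (f x) (~: T) <= _).
    by apply: leq_sum => x _; apply: N_sub; exact: fAc_sub.
  rewrite -(big_imset (fun v => N g v (~: T))) /=; last by move=> a b _ _; apply: finj.
  by apply: sum_sub; exact: fAc_sub.
have hA := lemA.
have eSA : S :&: A = A by apply/setIidPr; exact: subsetUl.
have eSA' : S :\: A = B.
  apply/setP => x; rewrite !inE; case xB: (x \in B); last by case: (f x < j).
  by have := subsetP sB x xB; rewrite !inE orbT andbT => ->.
have eAS : ~: A :&: S = B.
  apply/setP => x; rewrite !inE; case xB: (x \in B); last by case: (f x < j).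
  by have := subsetP sB x xB; rewrite !inE; case: (f x < j).
have eAS' : ~: A :\: S = ~: S.
  by apply/setP => x; rewrite !inE; case: (f x < j); case: (x \in B).
have H1 : \sum_(x in S) N h x setT = \sum_(x in A) N h x setT + \sum_(x in B) N h x setT.
  by rewrite (sum_split S A) eSA eSA'.
have H2 := sumdegh A.
have H4 : \sum_(x in ~: A) N h x A = \sum_(x in B) N h x A + \sum_(x in ~: S) N h x A.
  by rewrite (sum_split (~: A) S) eAS eAS'.
have H5 : \sum_(x in ~: A) N h x (~: A) = \sum_(x in B) N h x (~: A) + \sum_(x in ~: S) N h x (~: A).
  by rewrite (sum_split (~: A) S) eAS eAS'.
have H6 : \sum_(x in ~: S) N h x setT = \sum_(x in ~: S) N h x A + \sum_(x in ~: S) N h x (~: A).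
  by rewrite -big_split; apply: eq_bigr => x _; rewrite -(N_splitC h x A).
have H7 : \sum_(x in B) N h x setT = \sum_(x in B) N h x A + \sum_(x in B) N h x (~: A).
  by rewrite -big_split; apply: eq_bigr => x _; rewrite -(N_splitC h x A).
have H8 : (k - #|A|) * (k - 1) <= \sum_(x in B) N h x setT.
  by rewrite -cB; apply: sum_ge_card.
have H9 : \sum_(x in ~: S) minn k (N h x setT) <= \sum_(x in ~: S) N h x setT.
  by apply: leq_sum => x _; apply: geq_minr.
have ar := ar2 ak.
rewrite G1 G2 (sumdeg _ gsym).
move: hA G4 H1 H2 H4 H5 H6 H7 H8 H9 ar.
move: (k * (k - 1)) (j * (j - 1)) (#|A| * (#|A| - 1)) ((k - #|A|) * (k - 1)) => P Q R U.
genbig; lia.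
Qed.
End Graph.

Section Mdeg.
Variable s : seq nat.
Hypothesis ss : sorted geq s.
Hypothesis s0 : 0 < size s.

Lemma M1 : mdeg s <= size s.
Proof. by apply/bigmax_leqP => j _; exact: ltn_ord. Qed.

Lemma M1' : 1 <= mdeg s.
Proof.
rewrite /mdeg; exact: (@leq_bigmax_cond _ (fun j : 'I_(size s) => (j <= nth 0 s j)%N) (fun j : 'I_(size s) => j.+1) (Ordinal s0) (leq0n _)).
Qed.

Lemma M2 j : j < mdeg s -> j <= nth 0 s j.
Proof.
move=> jm; rewrite leqNgt; apply/negP => hj.
have : mdeg s <= j.
  apply/bigmax_leqP => i Pi; rewrite ltnNge; apply/negP => ji.
  have := nth_anti ss ji; move: Pi; lia.
lia.
Qed.

Lemma M3 v : mdeg s <= v -> nth 0 s v < mdeg s.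
Proof.
move=> mv; rewrite ltnNge; apply/negP => hv.
case: (ltnP v (size s)) => vs; last first.
  by move: hv; rewrite nth_default // leqn0 => /eqP h0; move: M1'; rewrite h0.
have ms : mdeg s < size s by apply: leq_ltn_trans vs.
have := @leq_bigmax_cond _ (fun j : 'I_(size s) => (j <= nth 0 s j)%N) (fun j : 'I_(size s) => j.+1) (Ordinal ms).
rewrite /= ltnn => H.
by have := H (leq_trans hv (nth_anti ss mv)).
Qed.
End Mdeg.

Lemma my_le_bigmax (r : seq nat) (F : nat -> int) idx i : i \in r ->
  (F i <= \big[Num.max/idx]_(k <- r) F k)%R.
Proof.
elim: r => // a r IH; rewrite inE big_cons le_max => /orP[/eqP->|ir].
  by rewrite lexx.
by rewrite IH ?orbT.
Qed.

Lemma my_bigmax_le (r : seq nat) (F : nat -> int) idx c :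
  (idx <= c)%R -> (forall i, i \in r -> F i <= c)%R ->
  (\big[Num.max/idx]_(k <- r) F k <= c)%R.
Proof.
move=> hi; elim: r => [|a r IH] H; first by rewrite big_nil.
rewrite big_cons ge_max H ?inE ?eqxx //=; apply: IH => i ir; apply: H; rewrite inE ir orbT //.
Qed.

Lemma ivt (c : nat -> nat) : c 0 = 0 -> (forall j, c j.+1 <= (c j).+1) ->
  forall M k, k <= c M -> exists2 j, j <= M & c j = k.
Proof.
move=> c0 cS; elim=> [|M IH] k hk.
  by exists 0 => //; move: hk; rewrite c0 leqn0 => /eqP.
case: (ltnP (c M) k) => hM.
  exists M.+1 => //; have := cS M; lia.
by have [j jM cj] := IH k hM; exists j => //; apply: leqW.
Qed.

Lemma sub_card (T : finType) (X : {set T}) t : t <= #|X| ->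
  exists B : {set T}, B \subset X /\ #|B| = t.
Proof.
move=> tX; exists [set x in take t (enum X)]; split.
  by apply/subsetP => x; rewrite inE => /mem_take; rewrite mem_enum.
rewrite cardsE (card_uniqP (take_uniq t (enum_uniq (mem X)))) size_take -cardE.
case: ltnP => // h; by apply/eqP; rewrite eqn_leq h tX.
Qed.

Lemma fin (e d : seq nat) n p (g : rel 'I_n) (h : rel 'I_p) (S : {set 'I_p}) k j :
  sorted geq e -> size e = p -> size d = n ->
  (forall x, N h x setT = nth 0 e x) -> (forall v, N g v setT = nth 0 d v) ->
  #|S| = k -> k <= p -> j <= n ->
  k * (k - 1) + \sum_(x in ~: S) minn k (N h x setT)
    + \sum_(v in [set v : 'I_n | v < j]) N g v setT <=
  j * (j - 1) + \sum_(v in ~: [set v : 'I_n | v < j]) minn j (N g v setT)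
    + \sum_(x in S) N h x setT ->
  (Delta k e <= Delta j d)%R.
Proof.
move=> se sze szd Eh Eg cS kp jn H.
rewrite (Delta_ord sze kp) (Delta_ord szd jn).
have Eh' : forall G : nat -> nat, forall X : {set 'I_p},
    \sum_(x in X) G (N h x setT) = \sum_(x in X) G (nth 0 e x).
  by move=> G X; apply: eq_bigr => x _; rewrite Eh.
have Eg' : forall G : nat -> nat, forall X : {set 'I_n},
    \sum_(x in X) G (N g x setT) = \sum_(x in X) G (nth 0 d x).
  by move=> G X; apply: eq_bigr => x _; rewrite Eg.
rewrite (Eh' (minn k)) (Eh' id) (Eg' id) (Eg' (minn j)) in H.
set K := [set x : 'I_p | (x < k)%N].
have tk := topk (F := fun i => nth 0 e i + minn k (nth 0 e i))
   (fun i j0 ij => ltac:(have := nth_anti se ij; lia)) kp cS.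
rewrite -/K !big_split /= in tk.
have c1 := sumC S (fun x : 'I_p => minn k (nth 0 e x)).
have c2 := sumC K (fun x : 'I_p => minn k (nth 0 e x)).
move: H tk c1 c2; move: (k * (k - 1))%N (j * (j - 1))%N => P Q.
genbig; lia.
Qed.
Unset Implicit Arguments. Set Strict Implicit.

Theorem theorem13 (e d : seq nat) :
  degree_sequence e -> degree_sequence d -> rao_le e d ->
  (Delta_star e <= Delta_star d)%R.
Proof.
move=> [e0 [se _]] [d0 [sd _]].
move=> [p [n [h [g [f [[[hsym hirr] [sze Hh]] [[gsym girr] [szd Hg]] finj fh]]]]]].
have Eh : forall x, N h x setT = nth 0 e x by move=> x; rewrite -deg_N; exact: Hh x.
have Eg : forall x, N g x setT = nth 0 d x by move=> x; rewrite -deg_N; exact: Hg x.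
have mdn : (mdeg d <= n)%N by rewrite -szd; exact: M1 d.
have md1 : (1 <= mdeg d)%N := M1' d0.
have key : forall k, (1 <= k <= mdeg e)%N -> (Delta k e <= Delta_star d)%R.
  move=> k /andP[k1 km].
  have kp : (k <= p)%N by rewrite -sze; apply: leq_trans km (M1 e).
  suff [j /andP[j1 jm] Hj] : exists2 j, (1 <= j <= mdeg d)%N & (Delta k e <= Delta j d)%R.
    apply: le_trans Hj _; rewrite /Delta_star.
    have hh : j \in index_iota 1 (mdeg d).+1 by rewrite mem_index_iota j1 ltnS.
    exact: my_le_bigmax hh.
  case: (leqP k #|[set x : 'I_p | (f x < mdeg d)%N]|) => ha.
  - pose c j := #|[set x : 'I_p | (f x < j)%N]|.
    have c0 : c 0 = 0%N.
      by apply/eqP; rewrite cards_eq0; apply/eqP/setP => x; rewrite !inE ltn0.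
    have cS : forall j, (c j.+1 <= (c j).+1)%N.
      move=> j; rewrite /c.
      apply: leq_trans (_ : #|[set x : 'I_p | (f x < j)%N] :|: [set x : 'I_p | (f x == j :> nat)]| <= _)%N.
        by apply: subset_leq_card; apply/subsetP => x; rewrite !inE ltnS leq_eqVlt orbC.
      rewrite cardsU -addn1; apply: leq_trans (leq_subr _ _) _; rewrite leq_add2l.
      apply/card_le1_eqP => x y; rewrite !inE => /eqP hx /eqP hy.
      by apply: finj; apply: val_inj; rewrite /= hx hy.
    have [j jm cj] := ivt c0 cS ha.
    have jn : (j <= n)%N by apply: leq_trans jm mdn.
    exists j.
      rewrite jm andbT lt0n; apply/negP => /eqP j0; move: cj; rewrite j0 c0 => k0.
      by move: k1; rewrite -k0.
    apply: (fin se sze szd Eh Eg cj kp jn).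
    exact: (star1 gsym girr hsym finj fh jn cj).
  - set A := [set x : 'I_p | (f x < mdeg d)%N] in ha *.
    set K := [set x : 'I_p | (x < k)%N].
    have cK : (k - #|A| <= #|K :\: A|)%N.
      rewrite cardsD card_lt //.
      have : (#|K :&: A| <= #|A|)%N by apply: subset_leq_card; apply: subsetIr.
      lia.
    have [B [sB cB]] := sub_card cK.
    have sBA : B \subset ~: A.
      by apply/subsetP => x /(subsetP sB); rewrite !inE => /andP[].
    have cS : #|A :|: B| = k.
      rewrite cardsU.
      have -> : A :&: B = set0.
        apply/setP => x; rewrite !inE; apply/negP => /andP[xA xB].
        by have := subsetP sBA x xB; rewrite !inE xA.
      rewrite cards0 subn0 cB; lia.
    exists (mdeg d); first by rewrite md1 leqnn.
    apply: (fin se sze szd Eh Eg cS kp mdn).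
    apply: (star2 gsym girr hsym finj fh mdn (ltnW ha) sBA cB).
      move=> x xB; rewrite Eh.
      have xk : (x < k)%N by move: (subsetP sB x xB); rewrite !inE => /andP[_].
      have := M2 se e0 (j := k.-1) ltac:(lia).
      have := nth_anti se (i := x) (j := k.-1) ltac:(lia).
      lia.
    move=> v; rewrite inE -leqNgt => vm; rewrite Eg.
    have := M3 sd d0 vm; lia.
rewrite /Delta_star; apply: my_bigmax_le.
  apply: key; rewrite leqnn /=; exact: M1' e0.
by move=> i; rewrite mem_index_iota ltnS => /key.
Qed.
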